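(* Let $\alpha\ge0$. There is a constant $C>0$ such that for all sufficiently large $k\in\mathbb N$, $$\int_{-\infty}^\infty h_k^2(x)(1+|x|)^\alpha dx\ge Ck^{\alpha/2}\quad\text{and}\quad\int_{-\infty}^\infty h_k^2(x)(1+|x|)^{-\alpha}dx\ge C\max\{k^{-\alpha/2},k^{-1/2}\}.$$
   Context: $h_k(t)=(2^kk!\sqrt\pi)^{-1/2}H_k(t)e^{-t^2/2}$ are the Hermite functions, where $H_k(t)=(-1)^ke^{t^2}\frac{d^k}{dt^k}e^{-t^2}$ are the Hermite polynomials. *)

(* Defs.v *)
From Stdlib Require Import Reals Factorial.
From Coquelicot Require Import Coquelicot.
Open Scope R_scope.

Definition hermite_poly (k : nat) (t : R) : R :=
  (-1) ^ k * exp (t ^ 2) * Derive_n (fun x => exp (- x ^ 2)) k t.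

Definition hermite_fun (k : nat) (t : R) : R :=
  / sqrt (2 ^ k * INR (fact k) * sqrt PI) * hermite_poly k t * exp (- t ^ 2 / 2).

(* Main.v *)
Require Import Defs.
From Stdlib Require Import Reals Factorial.
From Coquelicot Require Import Coquelicot.
Open Scope R_scope.
From Stdlib Require Import Lra Lia Psatz ZArith.
Open Scope R_scope.

Lemma dR_mult f g x df dg : is_derive f x df -> is_derive g x dg ->
  is_derive (fun t => f t * g t) x (df * g x + f x * dg).
Proof. intros. eapply is_derive_ext. 2: apply (is_derive_mult f g); auto. intro; reflexivity.
  intros; apply Rmult_comm. Qed.
Lemma dR_plus f g x df dg : is_derive f x df -> is_derive g x dg ->
  is_derive (fun t => f t + g t) x (df + dg).
Proof. intros. apply (is_derive_plus f g); auto. Qed.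
Lemma dR_minus f g x df dg : is_derive f x df -> is_derive g x dg ->
  is_derive (fun t => f t - g t) x (df - dg).
Proof. intros. apply (is_derive_minus f g); auto. Qed.
Lemma dR_scal c f x df : is_derive f x df -> is_derive (fun t => c * f t) x (c * df).
Proof. intros. apply (is_derive_scal f); auto. Qed.
Lemma dR_id x : is_derive (fun t => t) x 1.
Proof. auto_derive; auto. Qed.
Lemma dR_const c x : is_derive (fun _ => c) x 0.
Proof. auto_derive; auto. Qed.
Lemma dR_eq (f : R -> R) (x d d' : R) : is_derive f x d -> d = d' -> is_derive f x d'.
Proof. intros; subst; auto. Qed.

Fixpoint Hp (k : nat) (x : R) : R * R :=
  match k with
  | O => (1, 2 * x)
  | S k' => (snd (Hp k' x), 2 * x * snd (Hp k' x) - 2 * INR (S k') * fst (Hp k' x))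
  end.
Definition H (k : nat) (x : R) : R := fst (Hp k x).
Definition dH (k : nat) (x : R) : R :=
  match k with O => 0 | S k' => 2 * INR k * H k' x end.
Definition ddH (k : nat) (x : R) : R :=
  match k with O => 0 | S k' => 2 * INR k * dH k' x end.

Lemma H_S k x : H (S k) x = 2 * x * H k x - dH k x.
Proof.
  destruct k as [|k].
  - unfold H, dH; simpl; ring.
  - unfold H at 1, dH; simpl fst. fold (H (S k) x). unfold H at 2. simpl. ring_simplify. reflexivity.
Qed.

Lemma H_der_aux k : (forall x, is_derive (H (S k)) x (2 * INR (S k) * H k x)) /\
                    (forall x, is_derive (H (S (S k))) x (2 * INR (S (S k)) * H (S k) x)).
Proof.
  induction k as [|k [IH1 IH2]].
  - split; intro x.
    + apply (is_derive_ext (fun x => 2 * x)). { intro t; unfold H; simpl; ring. }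
      unfold H; simpl. auto_derive; auto; ring.
    + apply (is_derive_ext (fun x => 4 * x ^2 - 2)). { intro t; unfold H; simpl; ring. }
      unfold H; simpl. auto_derive; auto; ring.
  - split; [exact IH2|]. intro x.
    apply (is_derive_ext (fun t => 2 * t * H (S (S k)) t - 2 * INR (S (S k)) * H (S k) t)).
    { intro t. rewrite H_S. unfold dH. reflexivity. }
    eapply dR_eq.
    + apply dR_minus. apply dR_mult. apply dR_scal. apply dR_id. apply IH2.
      apply dR_scal. apply IH1.
    + rewrite (H_S (S k)). unfold dH.
      rewrite !S_INR. ring.
Qed.

Lemma H_der k x : is_derive (H k) x (dH k x).
Proof.
  destruct k as [|k].
  - apply (is_derive_ext (fun _ => 1)). { intro; reflexivity. } simpl; apply dR_const.
  - apply H_der_aux.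
Qed.

Lemma dH_der k x : is_derive (dH k) x (ddH k x).
Proof.
  destruct k as [|k].
  - apply (is_derive_ext (fun _ => 0)). { intro; reflexivity. } simpl; apply dR_const.
  - simpl. apply (is_derive_ext (fun t => 2 * INR (S k) * H k t)). { intro; reflexivity. }
    apply dR_scal. apply H_der.
Qed.

Lemma ddH_rel k x : ddH k x - 2 * x * dH k x = - 2 * INR k * H k x.
Proof.
  destruct k as [|k]; simpl.
  - ring.
  - rewrite H_S. fold (INR (S k)). ring.
Qed.

Lemma Derive_n_gauss k x :
  Derive_n (fun x => exp (- x ^ 2)) k x = (-1) ^ k * H k x * exp (- x ^ 2).
Proof.
  revert x; induction k as [|k IH]; intro x.
  - simpl. unfold H; simpl; ring.
  - simpl. rewrite (Derive_ext _ (fun x => (-1) ^ k * H k x * exp (- x ^ 2))); [|exact IH].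
    apply is_derive_unique.
    eapply dR_eq.
    + apply dR_mult. apply dR_scal. apply H_der.
      apply (is_derive_comp exp (fun t => - t^2)). apply is_derive_exp.
      auto_derive; auto.
    + rewrite H_S. simpl. unfold scal; simpl; unfold mult; simpl. ring.
Qed.

Definition g2 (x : R) := exp (- x ^ 2 / 2).
Definition phi (k : nat) (x : R) := H k x * g2 x.
Definition psi (k : nat) (x : R) := (dH k x - x * H k x) * g2 x.
Definition cst (k : nat) := / sqrt (2 ^ k * INR (fact k) * sqrt PI).

Lemma g2_der x : is_derive g2 x (- x * g2 x).
Proof. unfold g2. eapply dR_eq.
  apply (is_derive_comp exp (fun t => - t^2/2)). apply is_derive_exp. auto_derive; auto.
  simpl. unfold scal; simpl; unfold mult; simpl. field. Qed.

Lemma phi_der k x : is_derive (phi k) x (psi k x).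
Proof. unfold phi, psi. eapply dR_eq. apply dR_mult. apply H_der. apply g2_der. ring. Qed.

Lemma psi_der k x : is_derive (psi k) x ((x ^ 2 - (2 * INR k + 1)) * phi k x).
Proof. unfold phi, psi. eapply dR_eq. apply dR_mult. apply dR_minus. apply dH_der.
  apply dR_mult. apply dR_id. apply H_der. apply g2_der.
  pose proof (ddH_rel k x). nra. Qed.

Lemma phi_S k x : phi (S k) x = x * phi k x - psi k x.
Proof. unfold phi, psi. rewrite H_S. ring. Qed.

Lemma hermite_phi k x : hermite_fun k x = cst k * phi k x.
Proof. unfold hermite_fun, hermite_poly, cst, phi, g2. rewrite Derive_n_gauss.
  replace ((-1) ^ k * exp (x ^ 2) * ((-1) ^ k * H k x * exp (- x ^ 2)))
   with (((-1) * (-1)) ^ k * (exp (x ^ 2) * exp (- x ^ 2)) * H k x) by (rewrite Rpow_mult_distr; ring).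
  rewrite <- exp_plus. replace (x ^ 2 + - x ^ 2) with 0 by ring. rewrite exp_0.
  replace (-1 * -1) with 1 by ring. rewrite pow1. ring. Qed.

Lemma cst_sq k : cst k ^ 2 = / (2 ^ k * INR (fact k) * sqrt PI).
Proof. unfold cst. assert (0 < 2 ^ k * INR (fact k) * sqrt PI).
  { apply Rmult_lt_0_compat. apply Rmult_lt_0_compat. apply pow_lt; lra.
    apply lt_0_INR. apply lt_O_fact. apply sqrt_lt_R0. apply PI_RGT_0. }
  rewrite <- Rinv_pow. simpl. rewrite Rmult_1_r. rewrite sqrt_sqrt; lra. 
  apply Rgt_not_eq, sqrt_lt_R0; auto. Qed.

Lemma cst_sq_S k : cst (S k) ^ 2 = cst k ^ 2 / (2 * INR (S k)).
Proof. rewrite !cst_sq. change (fact (S k)) with (S k * fact k)%nat. rewrite mult_INR. 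
  assert (0 < INR (fact k)) by (apply lt_0_INR, lt_O_fact).
  assert (0 < sqrt PI) by (apply sqrt_lt_R0, PI_RGT_0).
  assert (0 < INR (S k)) by (apply lt_0_INR; lia).
  assert (0 < 2 ^ k) by (apply pow_lt; lra).
  rewrite <- tech_pow_Rmult. field. repeat split; lra. Qed.

Lemma phi_cont k x : continuous (phi k) x.
Proof. apply (ex_derive_continuous (phi k)). eexists. apply phi_der. Qed.
Lemma psi_cont k x : continuous (psi k) x.
Proof. apply (ex_derive_continuous (psi k)). eexists. apply psi_der. Qed.

Notation mi := (Rbar_locally m_infty).
Notation pi := (Rbar_locally p_infty).

Lemma ball_R (l e y : R) : ball l e y <-> Rabs (y - l) < e.
Proof. unfold ball; simpl; unfold AbsRing_ball, abs, minus, plus, opp; simpl. tauto. Qed.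

Lemma gen_prim (f G K : R -> R) (c lg lk : R) :
 (forall a b, a <= c -> c <= b -> is_RInt f a b (G b - K a)) ->
 filterlim G pi (locally lg) ->
 filterlim K mi (locally lk) ->
 is_RInt_gen f mi pi (lg - lk).
Proof.
  intros HI HG HK P [eps HP]. unfold filtermapi.
  assert (e2 : 0 < eps / 2) by (destruct eps; simpl; lra).
  set (e := mkposreal _ e2).
  assert (HG' := HG (ball lg e) (locally_ball lg e)).
  assert (HK' := HK (ball lk e) (locally_ball lk e)).
  destruct HG' as [Mg HMg]. destruct HK' as [Mk HMk].
  apply (Filter_prod _ _ _ (fun a => a < Rmin c Mk) (fun b => Rmax c Mg < b)).
  - exists (Rmin c Mk). auto.
  - exists (Rmax c Mg). auto.
  - intros a b Ha Hb. exists (G b - K a). split.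
    + apply HI. apply Rlt_le, Rlt_le_trans with (1 := Ha), Rmin_l.
      apply Rlt_le, Rle_lt_trans with (2 := Hb), Rmax_l.
    + apply HP. apply ball_R.
      assert (h1 := HMg b (Rle_lt_trans _ _ _ (Rmax_r _ _) Hb)).
      assert (h2 := HMk a (Rlt_le_trans _ _ _ Ha (Rmin_r _ _))).
      unfold e in h1, h2; simpl in h1, h2.
      assert (h1' : Rabs (G b - lg) < eps/2) by (apply ball_R; exact h1).
      assert (h2' : Rabs (K a - lk) < eps/2) by (apply ball_R; exact h2).
      apply Rabs_def2 in h1'. apply Rabs_def2 in h2'. apply Rabs_def1; lra.
Qed.

Lemma gen_lower (f : R -> R) (l m : R) :
  is_RInt_gen f mi pi l ->
  filter_prod mi pi (fun ab => forall y, is_RInt f (fst ab) (snd ab) y -> m <= y) ->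
  m <= l.
Proof.
  intros Hl HQ. destruct (Rle_lt_dec m l) as [h|h]; auto. exfalso.
  assert (e2 : 0 < (m - l) / 2) by lra.
  assert (HP := Hl (ball l (mkposreal _ e2)) (locally_ball l _)).
  unfold filtermapi in HP.
  assert (Hp : ProperFilter (filter_prod mi pi)) by (apply filter_prod_proper; apply Rbar_locally_filter).
  destruct (Hierarchy.filter_ex _ (filter_and _ _ HP HQ)) as [[a b] [[y [Hy1 Hy2]] Hm]].
  simpl in *. assert (Hy3 : Rabs (y - l) < (m - l)/2) by (apply ball_R; exact Hy2).
  specialize (Hm y Hy1).
  apply Rabs_def2 in Hy3. lra.
Qed.

Lemma gen_nonneg (f : R -> R) (l : R) : is_RInt_gen f mi pi l -> (forall x, 0 <= f x) -> 0 <= l.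
Proof.
  intros Hl Hf. apply (gen_lower f); auto.
  apply (Filter_prod _ _ _ (fun a => a < 0) (fun b => 0 < b)).
  exists 0; auto. exists 0; auto.
  intros a b Ha Hb; simpl; intros y Hy. rewrite <- (is_RInt_unique _ _ _ _ Hy).
  apply RInt_ge_0. lra. eexists; eauto. intros; auto.
Qed.

Lemma gen_sub (f : R -> R) (l c d : R) : is_RInt_gen f mi pi l -> (forall x, 0 <= f x) ->
  (forall x, continuous f x) -> c <= d -> RInt f c d <= l.
Proof.
  intros Hl Hf Hc Hcd. apply (gen_lower f); auto.
  apply (Filter_prod _ _ _ (fun a => a < c) (fun b => d < b)).
  exists c; auto. exists d; auto.
  intros a b Ha Hb; simpl; intros y Hy. rewrite <- (is_RInt_unique _ _ _ _ Hy).
  assert (ex : forall u v, ex_RInt f u v) by (intros; apply (@ex_RInt_continuous R_CompleteNormedModule); auto).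
  rewrite <- (RInt_Chasles f a c b) by auto. rewrite <- (RInt_Chasles f c d b) by auto.
  assert (0 <= RInt f a c) by (apply RInt_ge_0; auto; lra).
  assert (0 <= RInt f d b) by (apply RInt_ge_0; auto; lra).
  unfold plus; simpl; lra.
Qed.

Lemma gen_unique (f : R -> R) (l1 l2 : R) : is_RInt_gen f mi pi l1 -> is_RInt_gen f mi pi l2 -> l1 = l2.
Proof. intros H1 H2. rewrite <- (is_RInt_gen_unique f l1 H1). apply is_RInt_gen_unique; auto. Qed.

Lemma gen_ex (f : R -> R) (B : R) : (forall x, continuous f x) ->
  (forall x, 0 <= f x <= B / (1 + x ^ 2)) -> exists I : R, is_RInt_gen f mi pi I.
Proof.
  intros Hc Hb.
  assert (ex : forall u v, ex_RInt f u v) by (intros; apply (@ex_RInt_continuous R_CompleteNormedModule); auto).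
  assert (Hpos : forall x, 0 < 1 + x ^ 2) by (intro x; nra).
  assert (Hat : forall a b, is_RInt (fun x => B * / (1 + x ^ 2)) a b (B * (atan b - atan a))).
  { intros a b. replace (B * (atan b - atan a)) with (minus (B * atan b) (B * atan a)) by (unfold minus, plus, opp; simpl; ring).
    apply (is_RInt_derive (fun x => B * atan x) (fun x => B * / (1 + x ^ 2))).
    intros; apply dR_scal, is_derive_Reals, derivable_pt_lim_atan.
    intros x _. apply (ex_derive_continuous (fun x => B * / (1 + x ^ 2))). auto_derive.
    specialize (Hpos x). lra. }
  assert (HB : 0 <= B). { destruct (Hb 0) as [h1 h2]. simpl in h2. lra. }
  assert (Hbd : forall a b, a <= b -> RInt f a b <= B * PI).
  { intros a b Hab. rewrite <- (Rmult_1_l (RInt f a b)).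
    apply Rle_trans with (RInt (fun x => B * / (1 + x ^ 2)) a b).
    rewrite Rmult_1_l. apply RInt_le; auto. eexists; apply Hat.
    intros x _. specialize (Hb x). unfold Rdiv in Hb. lra.
    rewrite (is_RInt_unique _ _ _ _ (Hat a b)).
    pose proof (atan_bound a); pose proof (atan_bound b). nra. }
  set (E := fun y => exists a b, a <= b /\ y = RInt f a b).
  destruct (completeness E) as [l [Hub Hlub]].
  { exists (B * PI). intros y [a [b [Hab ->]]]. auto. }
  { exists (RInt f 0 0). exists 0, 0. split; auto; lra. }
  exists l. intros P [eps HP]. unfold filtermapi.
  destruct (Classical_Prop.classic (exists a0 b0, a0 <= b0 /\ l - eps < RInt f a0 b0)) as [[a0 [b0 [Hab0 Hgt]]]|Hno].
  2:{ exfalso. assert (l <= l - eps). { apply Hlub. intros y [a [b [Hab ->]]].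
        destruct (Rle_lt_dec (RInt f a b) (l - eps)) as [h|h]; auto. exfalso; apply Hno; eauto. }
      destruct eps; simpl in *; lra. }
  apply (Filter_prod _ _ _ (fun a => a < a0) (fun b => b0 < b)).
  exists a0; auto. exists b0; auto.
  intros a b Ha Hb'. exists (RInt f a b). split. apply (@RInt_correct R_CompleteNormedModule); auto.
  apply HP. apply ball_R.
  assert (Hle_l : RInt f a b <= l) by (apply Hub; exists a, b; split; auto; lra).
  rewrite <- (RInt_Chasles f a a0 b) by auto. rewrite <- (RInt_Chasles f a0 b0 b) by auto.
  assert (0 <= RInt f a a0) by (apply RInt_ge_0; auto; try lra; intros; apply Hb).
  assert (0 <= RInt f b0 b) by (apply RInt_ge_0; auto; try lra; intros; apply Hb).
  rewrite <- (RInt_Chasles f a a0 b) in Hle_l by auto. rewrite <- (RInt_Chasles f a0 b0 b) in Hle_l by auto.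
  unfold plus in *; simpl in *. apply Rabs_def1; lra.
Qed.

Lemma gen_ext (f g : R -> R) (l : R) : (forall x, f x = g x) -> is_RInt_gen f mi pi l -> is_RInt_gen g mi pi l.
Proof. intros He Hf. eapply is_RInt_gen_ext; [| exact Hf].
  apply (Filter_prod _ _ _ (fun _ => True) (fun _ => True)). exists 0; auto. exists 0; auto.
  intros; auto. Qed.

Lemma gen_lin (f g : R -> R) (a b lf lg : R) : is_RInt_gen f mi pi lf -> is_RInt_gen g mi pi lg ->
  is_RInt_gen (fun x => a * f x + b * g x) mi pi (a * lf + b * lg).
Proof. intros Hf Hg. apply (is_RInt_gen_plus (fun x => a * f x) (fun x => b * g x));
  [apply (is_RInt_gen_scal f a lf) | apply (is_RInt_gen_scal g b lg)]; auto. Qed.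

Lemma gen_le (f g : R -> R) (lf lg : R) : is_RInt_gen f mi pi lf -> is_RInt_gen g mi pi lg ->
  (forall x, f x <= g x) -> lf <= lg.
Proof. intros Hf Hg Hle.
  assert (h := gen_lin g f 1 (-1) lg lf Hg Hf).
  apply gen_nonneg in h. lra. intro x; specialize (Hle x); lra. Qed.

Definition PBw (w : R -> R) (f : R -> R) :=
  exists A m, 0 <= A /\ forall x, Rabs (f x) <= A * (1 + Rabs x) ^ m * w x.

Lemma u_ge1 x : 1 <= 1 + Rabs x.
Proof. pose proof (Rabs_pos x); lra. Qed.

Lemma PBw_ext w w' f f' : (forall x, w x = w' x) -> (forall x, f x = f' x) -> PBw w f -> PBw w' f'.
Proof. intros Hw Hf [A [m [HA H]]]. exists A, m. split; auto. intro x. rewrite <- Hw, <- Hf. auto. Qed.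

Lemma PBw_plus w f g : (forall x, 0 <= w x) -> PBw w f -> PBw w g -> PBw w (fun x => f x + g x).
Proof. intros Hw [A [m [HA Hf]]] [A' [m' [HA' Hg]]]. exists (A + A'), (m + m')%nat. split. lra.
  intro x. eapply Rle_trans. apply Rabs_triang.
  assert (h1 : (1 + Rabs x) ^ m <= (1 + Rabs x) ^ (m + m')) by (apply Rle_pow; [apply u_ge1|lia]).
  assert (h2 : (1 + Rabs x) ^ m' <= (1 + Rabs x) ^ (m + m')) by (apply Rle_pow; [apply u_ge1|lia]).
  specialize (Hf x); specialize (Hg x); specialize (Hw x).
  assert (A * (1 + Rabs x) ^ m * w x <= A * (1 + Rabs x) ^ (m + m') * w x).
  { apply Rmult_le_compat_r; auto. apply Rmult_le_compat_l; auto. }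
  assert (A' * (1 + Rabs x) ^ m' * w x <= A' * (1 + Rabs x) ^ (m + m') * w x).
  { apply Rmult_le_compat_r; auto. apply Rmult_le_compat_l; auto. }
  lra. Qed.

Lemma PBw_scal w c f : PBw w f -> PBw w (fun x => c * f x).
Proof. intros [A [m [HA Hf]]]. exists (Rabs c * A), m. split. apply Rmult_le_pos; auto; apply Rabs_pos.
  intro x. rewrite Rabs_mult. rewrite !Rmult_assoc. apply Rmult_le_compat_l. apply Rabs_pos.
  rewrite <- !Rmult_assoc. auto. Qed.

Lemma PBw_mulx w f : (forall x, 0 <= w x) -> PBw w f -> PBw w (fun x => x * f x).
Proof. intros Hw [A [m [HA Hf]]]. exists A, (S m). split; auto. intro x. rewrite Rabs_mult.
  specialize (Hf x). specialize (Hw x). simpl.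
  assert (Rabs x <= 1 + Rabs x) by lra.
  assert (0 <= (1 + Rabs x) ^ m) by (apply pow_le; pose proof (Rabs_pos x); lra).
  assert (0 <= Rabs (f x)) by apply Rabs_pos. pose proof (Rabs_pos x).
  apply Rle_trans with ((1 + Rabs x) * Rabs (f x)).
  apply Rmult_le_compat_r; auto.
  replace (A * ((1 + Rabs x) * (1 + Rabs x) ^ m) * w x) with ((1 + Rabs x) * (A * (1 + Rabs x) ^ m * w x)) by ring.
  apply Rmult_le_compat_l; lra. Qed.

Lemma PBw_mult w1 w2 f g : PBw w1 f -> PBw w2 g -> PBw (fun x => w1 x * w2 x) (fun x => f x * g x).
Proof. intros [A [m [HA Hf]]] [A' [m' [HA' Hg]]]. exists (A * A'), (m + m')%nat. split. nra.
  intro x. rewrite Rabs_mult. rewrite pow_add.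
  replace (A * A' * ((1 + Rabs x) ^ m * (1 + Rabs x) ^ m') * (w1 x * w2 x)) with
    ((A * (1 + Rabs x) ^ m * w1 x) * (A' * (1 + Rabs x) ^ m' * w2 x)) by ring.
  apply Rmult_le_compat; auto; apply Rabs_pos. Qed.

Lemma PB_const c : PBw (fun _ => 1) (fun _ => c).
Proof. exists (Rabs c), 0%nat. split. apply Rabs_pos. intro; simpl; lra. Qed.

Lemma pow_exp_le y n : 0 <= y -> y ^ n <= INR (fact n) * exp y.
Proof. intros Hy.
  assert (Hf : 0 < INR (fact n)) by (apply lt_0_INR, lt_O_fact).
  assert (h : y ^ n / INR (fact n) <= exp y).
  { apply Rle_trans with (2 := exp_ge_taylor y n Hy). destruct n.
    simpl. lra. rewrite tech5. assert (0 <= sum_f_R0 (fun k => y ^ k / INR (fact k)) n).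
    apply cond_pos_sum. intro k. apply Rmult_le_pos. apply pow_le; auto.
    apply Rlt_le, Rinv_0_lt_compat, lt_0_INR, lt_O_fact. lra. }
  unfold Rdiv in h. apply Rmult_le_compat_l with (r := INR (fact n)) in h; [|lra].
  rewrite <- Rmult_assoc, (Rmult_comm _ (y^n)), Rmult_assoc, Rinv_r, Rmult_1_r in h; lra. Qed.

Lemma key_bound m : exists B, 0 <= B /\ forall x, (1 + Rabs x) ^ m * exp (- x ^ 2) <= B / (1 + x ^ 2).
Proof.
  set (j := (m + 2)%nat).
  exists (2 ^ j * INR (fact j) * exp 1). split.
  { apply Rmult_le_pos. apply Rmult_le_pos. apply pow_le; lra. apply pos_INR. apply Rlt_le, exp_pos. }
  intro x. pose proof (Rabs_pos x) as Hx. set (u := 1 + Rabs x).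
  assert (Hu : 1 <= u) by (unfold u; lra).
  assert (Hp : 0 < 1 + x ^ 2) by nra.
  assert (Hux : u ^ 2 <= 2 * (1 + x ^ 2)).
  { unfold u. rewrite <- (pow2_abs x). pose proof (pow2_ge_0 (Rabs x - 1)). simpl in *. nra. }
  assert (h1 : u ^ m * (1 + x ^ 2) <= u ^ j).
  { unfold j. rewrite pow_add. apply Rmult_le_compat_l. apply pow_le; lra.
    rewrite <- (pow2_abs x). unfold u. nra. }
  assert (h2 : u ^ j <= (2 * (1 + x ^ 2)) ^ j).
  { apply Rle_trans with ((u ^ 2) ^ j). rewrite <- pow_mult. apply Rle_pow; auto. lia.
    apply pow_incr. split; auto. apply pow_le; lra. }
  rewrite Rpow_mult_distr in h2.
  assert (h3 := pow_exp_le (1 + x ^ 2) j (Rlt_le _ _ Hp)).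
  rewrite exp_plus in h3.
  assert (He : 0 < exp (- x ^ 2)) by apply exp_pos.
  assert (He2 : exp (x ^ 2) * exp (- x ^ 2) = 1) by (rewrite <- exp_plus; replace (x^2 + - x^2) with 0 by ring; apply exp_0).
  apply Rmult_le_reg_r with (1 + x ^ 2); auto. match goal with |- _ <= ?R => replace R with (2 ^ j * INR (fact j) * exp 1) by (field; lra) end.
  replace (u ^ m * exp (- x ^ 2) * (1 + x ^ 2)) with ((u ^ m * (1 + x ^ 2)) * exp (- x ^ 2)) by ring.
  apply Rle_trans with (2 ^ j * (1 + x ^ 2) ^ j * exp (- x ^ 2)).
  apply Rmult_le_compat_r; lra.
  assert (0 < 2 ^ j) by (apply pow_lt; lra).
  apply Rle_trans with (2 ^ j * (INR (fact j) * (exp 1 * exp (x ^ 2))) * exp (- x ^ 2)).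
  apply Rmult_le_compat_r; [lra|]. apply Rmult_le_compat_l; lra.
  replace (2 ^ j * (INR (fact j) * (exp 1 * exp (x ^ 2))) * exp (- x ^ 2)) with
    (2 ^ j * INR (fact j) * exp 1 * (exp (x ^ 2) * exp (- x ^ 2))) by ring.
  rewrite He2. lra.
Qed.

Definition Dom := PBw (fun x => exp (- x ^ 2)).

Lemma Dom_bound f : Dom f -> exists B, forall x, Rabs (f x) <= B / (1 + x ^ 2).
Proof. intros [A [m [HA Hf]]]. destruct (key_bound m) as [B [HB HK]].
  exists (A * B). intro x. eapply Rle_trans. apply Hf.
  rewrite Rmult_assoc. unfold Rdiv. rewrite Rmult_assoc. apply Rmult_le_compat_l; auto. Qed.

Lemma Dom_ex f : Dom f -> (forall x, continuous f x) -> (forall x, 0 <= f x) -> exists I : R, is_RInt_gen f mi pi I.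
Proof. intros Hd Hc Hp. destruct (Dom_bound f Hd) as [B HB]. apply (gen_ex f B); auto.
  intro x. split; auto. specialize (HB x). rewrite Rabs_right in HB; auto. apply Rle_ge; auto. Qed.

Lemma Dom_lim_p f : Dom f -> filterlim f pi (locally 0).
Proof. intros Hd. destruct (Dom_bound f Hd) as [B HB]. intros P [eps HP].
  exists (Rmax 1 (B / eps)). intros x Hx. apply HP. apply ball_R.
  assert (h1 := Rmax_l 1 (B / eps)). assert (h2 := Rmax_r 1 (B / eps)).
  destruct eps as [eps Heps]. simpl in *. specialize (HB x).
  rewrite Rminus_0_r. eapply Rle_lt_trans. apply HB.
  apply Rmult_lt_reg_r with (1 + x ^ 2). nra. unfold Rdiv. rewrite Rmult_assoc, Rinv_l by nra.
  assert (B < eps * x). { apply Rmult_lt_reg_r with (/eps). apply Rinv_0_lt_compat; auto.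
    rewrite (Rmult_comm eps), Rmult_assoc, Rinv_r by lra. unfold Rdiv in h2. lra. }
  assert (eps * x <= eps * x ^ 2) by (apply Rmult_le_compat_l; simpl; nra). lra. Qed.

Lemma Dom_lim_m f : Dom f -> filterlim f mi (locally 0).
Proof. intros Hd. destruct (Dom_bound f Hd) as [B HB]. intros P [eps HP].
  exists (- Rmax 1 (B / eps)). intros x Hx. apply HP. apply ball_R.
  assert (h1 := Rmax_l 1 (B / eps)). assert (h2 := Rmax_r 1 (B / eps)).
  destruct eps as [eps Heps]. simpl in *. specialize (HB x).
  rewrite Rminus_0_r. eapply Rle_lt_trans. apply HB.
  apply Rmult_lt_reg_r with (1 + x ^ 2). nra. unfold Rdiv. rewrite Rmult_assoc, Rinv_l by nra.
  assert (B < eps * (- x)). { apply Rmult_lt_reg_r with (/eps). apply Rinv_0_lt_compat; auto.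
    rewrite (Rmult_comm eps), Rmult_assoc, Rinv_r by lra. unfold Rdiv in h2. lra. }
  assert (eps * (-x) <= eps * x ^ 2) by (apply Rmult_le_compat_l; simpl; nra). lra. Qed.

Lemma cR_mult (f g : R -> R) x : continuous f x -> continuous g x -> continuous (fun t => f t * g t) x.
Proof. intros; apply (continuous_mult f g); auto. Qed.
Lemma cR_plus (f g : R -> R) x : continuous f x -> continuous g x -> continuous (fun t => f t + g t) x.
Proof. intros; apply (continuous_plus f g); auto. Qed.
Lemma cR_minus (f g : R -> R) x : continuous f x -> continuous g x -> continuous (fun t => f t - g t) x.
Proof. intros; apply (continuous_minus f g); auto. Qed.
Lemma cR_id x : continuous (fun t : R => t) x.
Proof. apply continuous_id. Qed.
Lemma cR_const (c x : R) : continuous (fun _ : R => c) x.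
Proof. apply continuous_const. Qed.

Lemma cR_rpow (a x : R) : continuous (fun t => Rpower (1 + Rabs t) a) x.
Proof.
  apply (continuous_comp (fun t => 1 + Rabs t) (fun y => Rpower y a)).
  - apply continuity_pt_filterlim. apply continuity_pt_plus. apply continuity_pt_const. intros u v; auto.
    apply Rcontinuity_abs.
  - apply (ex_derive_continuous (fun y => Rpower y a)). eexists. apply is_derive_Reals.
    apply derivable_pt_lim_power. pose proof (Rabs_pos x); lra.
Qed.

Lemma g2_pos x : 0 < g2 x.
Proof. apply exp_pos. Qed.

Lemma PB_H k : PBw (fun _ => 1) (H k) /\ PBw (fun _ => 1) (H (S k)).
Proof.
  induction k as [|k [IH1 IH2]].
  - split.
    + apply (PBw_ext (fun _ => 1) (fun _ => 1) (fun _ => 1)); auto. apply PB_const.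
    + apply (PBw_ext (fun _ => 1) (fun _ => 1) (fun x => x * 2)). auto. intro; unfold H; simpl; ring.
      apply PBw_mulx. intros; lra. apply PB_const.
  - split; auto.
    apply (PBw_ext (fun _ => 1) (fun _ => 1) (fun x => 2 * (x * H (S k) x) + (- 2 * INR (S k)) * H k x)). auto.
    intro x. rewrite (H_S (S k)). unfold dH. ring.
    apply PBw_plus. intros; lra. apply PBw_scal, PBw_mulx; auto. intros; lra.
    apply PBw_scal; auto.
Qed.

Lemma PB_dH k : PBw (fun _ => 1) (dH k).
Proof. destruct k. apply (PBw_ext (fun _ => 1) (fun _ => 1) (fun _ => 0)); auto. apply PB_const.
  simpl. apply (PBw_ext (fun _ => 1) (fun _ => 1) (fun x => (2 * INR (S k)) * H k x)); auto. apply PBw_scal, PB_H. Qed.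

Definition D1 := PBw g2.

Lemma D1_g2 : D1 g2.
Proof. exists 1, 0%nat. split. lra. intro x. simpl. rewrite Rabs_right. lra. left; apply g2_pos. Qed.

Lemma D1_of_PB f : PBw (fun _ => 1) f -> D1 (fun x => f x * g2 x).
Proof. intros Hf. apply (PBw_ext (fun x => 1 * g2 x) g2 (fun x => f x * g2 x)); auto. intros; ring.
  apply PBw_mult; auto. apply D1_g2. Qed.

Lemma D1_phi k : D1 (phi k).
Proof. apply (PBw_ext g2 g2 (fun x => H k x * g2 x)); auto. apply D1_of_PB, PB_H. Qed.

Lemma D1_psi k : D1 (psi k).
Proof. apply (PBw_ext g2 g2 (fun x => (dH k x + (-1) * (x * H k x)) * g2 x)); auto.
  intros; unfold psi; ring. apply D1_of_PB. apply PBw_plus. intros; lra. apply PB_dH.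
  apply PBw_scal, PBw_mulx. intros; lra. apply PB_H. Qed.

Lemma Dom_prod f g : D1 f -> D1 g -> Dom (fun x => f x * g x).
Proof. intros Hf Hg. apply (PBw_ext (fun x => g2 x * g2 x) (fun x => exp (- x ^ 2)) (fun x => f x * g x)); auto.
  intro x; unfold g2. rewrite <- exp_plus. f_equal. field. apply PBw_mult; auto. Qed.

Lemma exp_nonneg x : 0 <= exp (- x ^ 2).
Proof. left; apply exp_pos. Qed.

Lemma Dom_plus f g : Dom f -> Dom g -> Dom (fun x => f x + g x).
Proof. apply PBw_plus. apply exp_nonneg. Qed.
Lemma Dom_scal c f : Dom f -> Dom (fun x => c * f x).
Proof. apply PBw_scal. Qed.
Lemma Dom_mulx f : Dom f -> Dom (fun x => x * f x).
Proof. apply PBw_mulx. apply exp_nonneg. Qed.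
Lemma Dom_ext f g : (forall x, f x = g x) -> Dom f -> Dom g.
Proof. intros; apply (PBw_ext (fun x => exp (- x ^ 2)) (fun x => exp (- x ^ 2)) f); auto. Qed.

Lemma Dom_weight f g n : Dom f -> (forall x, Rabs (g x) <= (1 + Rabs x) ^ n) -> Dom (fun x => f x * g x).
Proof. intros [A [m [HA Hf]]] Hg. exists A, (m + n)%nat. split; auto. intro x.
  rewrite Rabs_mult, pow_add. specialize (Hf x). specialize (Hg x).
  pose proof (exp_nonneg x). assert (0 <= (1 + Rabs x) ^ m) by (apply pow_le; pose proof (Rabs_pos x); lra).
  replace (A * ((1 + Rabs x) ^ m * (1 + Rabs x) ^ n) * exp (- x ^ 2)) with
    ((A * (1 + Rabs x) ^ m * exp (- x ^ 2)) * (1 + Rabs x) ^ n) by ring.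
  apply Rmult_le_compat; auto; apply Rabs_pos. Qed.

Lemma gen_zero (f G : R -> R) : (forall x, is_derive G x (f x)) -> (forall x, continuous f x) ->
  Dom G -> is_RInt_gen f mi pi 0.
Proof. intros Hd Hc HD. replace 0 with (0 - 0) by ring.
  apply (gen_prim f G G 0). intros a b _ _.
  assert (h := is_RInt_derive G f a b (fun x _ => Hd x) (fun x _ => Hc x)). exact h.
  apply Dom_lim_p; auto. apply Dom_lim_m; auto. Qed.

Definition w k := 2 * INR k + 1.

Lemma phi_der' k x : is_derive (fun t => phi k t) x (psi k x).
Proof. apply phi_der. Qed.
Lemma psi_der' k x : is_derive (fun t => psi k t) x ((x ^ 2 - (2 * INR k + 1)) * phi k x).
Proof. apply psi_der. Qed.

Ltac der_step := match goal with
 | |- is_derive (fun t => @?f t + @?g t) _ _ => apply (dR_plus f g)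
 | |- is_derive (fun t => @?f t - @?g t) _ _ => apply (dR_minus f g)
 | |- is_derive (fun t => t) _ _ => apply dR_id
 | |- is_derive (fun t => phi ?k t) _ _ => apply (phi_der' k)
 | |- is_derive (fun t => psi ?k t) _ _ => apply (psi_der' k)
 | |- is_derive (fun t => ?c * @?f t) _ _ => apply (dR_scal c f)
 | |- is_derive (fun t => @?f t * @?g t) _ _ => apply (dR_mult f g)
 | |- is_derive (fun t => ?c) _ _ => apply (dR_const c)
 end.
Ltac der_tac := repeat der_step.

Ltac cont_step := match goal with
 | |- continuous (fun t => @?f t + @?g t) _ => apply (cR_plus f g)
 | |- continuous (fun t => @?f t - @?g t) _ => apply (cR_minus f g)
 | |- continuous (fun t => t) _ => apply cR_id
 | |- continuous (fun t => phi ?k t) _ => apply (phi_cont k)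
 | |- continuous (fun t => psi ?k t) _ => apply (psi_cont k)
 | |- continuous (fun t => Rpower (1 + Rabs t) ?a) _ => apply (cR_rpow a)
 | |- continuous (fun t => @?f t * @?g t) _ => apply (cR_mult f g)
 | |- continuous (fun t => ?c) _ => apply (cR_const c)
 end.
Ltac cont_tac := repeat cont_step.

Lemma Dom_phiphi k : Dom (fun t => phi k t * phi k t).
Proof. apply Dom_prod; apply D1_phi. Qed.
Lemma Dom_phipsi k : Dom (fun t => phi k t * psi k t).
Proof. apply Dom_prod. apply D1_phi. apply D1_psi. Qed.
Lemma Dom_psipsi k : Dom (fun t => psi k t * psi k t).
Proof. apply Dom_prod; apply D1_psi. Qed.

Ltac dom_step := match goal with
 | |- Dom (fun t => @?f t + @?g t) => apply (Dom_plus f g)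
 | |- Dom (fun t => phi ?k t * phi ?k t) => apply (Dom_phiphi k)
 | |- Dom (fun t => phi ?k t * psi ?k t) => apply (Dom_phipsi k)
 | |- Dom (fun t => psi ?k t * psi ?k t) => apply (Dom_psipsi k)
 | |- Dom (fun t => t * @?f t) => apply (Dom_mulx f)
 | |- Dom (fun t => ?c * @?f t) => apply (Dom_scal c f)
 end.
Ltac dom_tac := repeat dom_step.

Lemma RI_chasles (f : R -> R) a b c l1 l2 : is_RInt f a b l1 -> is_RInt f b c l2 -> is_RInt f a c (l1 + l2).
Proof. intros. apply (is_RInt_Chasles f a b c l1 l2); auto. Qed.
Lemma RI_opp (f : R -> R) a b l : is_RInt f a b l -> is_RInt (fun x => - f x) a b (- l).
Proof. intros. apply (is_RInt_opp f a b l); auto. Qed.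
Lemma RI_derive (F f : R -> R) a b : (forall x, is_derive F x (f x)) -> (forall x, continuous f x) ->
  is_RInt f a b (F b - F a).
Proof. intros. apply (is_RInt_derive F f a b); auto. Qed.

Lemma lim_cminus F (FF : Filter F) (f : R -> R) c : filterlim f F (locally 0) -> filterlim (fun x => c - f x) F (locally (c - 0)).
Proof. intros H P [eps HP]. unfold filtermap. apply (filter_imp (fun x => ball 0 eps (f x))).
  intros x Hx. apply HP. apply ball_R. assert (h : Rabs (f x - 0) < eps) by (apply ball_R; exact Hx).
  eapply Rle_lt_trans; [| exact h]. right. rewrite <- Rabs_Ropp. f_equal. lra.
  apply (H (ball 0 eps) (locally_ball 0 eps)). Qed.
Lemma lim_minusc F (FF : Filter F) (f : R -> R) c : filterlim f F (locally 0) -> filterlim (fun x => f x - c) F (locally (0 - c)).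
Proof. intros H P [eps HP]. unfold filtermap. apply (filter_imp (fun x => ball 0 eps (f x))).
  intros x Hx. apply HP. apply ball_R. assert (h : Rabs (f x - 0) < eps) by (apply ball_R; exact Hx).
  eapply Rle_lt_trans; [| exact h]. right. f_equal. lra.
  apply (H (ball 0 eps) (locally_ball 0 eps)). Qed.

Section K.
Variable k : nat.
Let p := phi k.
Let q := psi k.

Definition G1 x := x * (psi k x * psi k x) + (-1) * (x * (x * (x * (phi k x * phi k x))))
  + w k * (x * (phi k x * phi k x)) + (-1) * (phi k x * psi k x).

Lemma I1 : is_RInt_gen (fun x => (2 * w k) * (phi k x * phi k x) + (-4) * (x * (x * (phi k x * phi k x)))) mi pi 0.
Proof. apply (gen_zero _ G1).
  - intro x. unfold G1. eapply dR_eq. der_tac. unfold w. ring.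
  - intro x. cont_tac.
  - unfold G1. dom_tac.
Qed.

Definition G2 x := 3 * (x * (x * (phi k x * psi k x))) + (-3) * (x * (phi k x * phi k x))
  + (-1) * (x * (x * (x * (psi k x * psi k x)))) + x * (x * (x * (x * (x * (phi k x * phi k x)))))
  + (- w k) * (x * (x * (x * (phi k x * phi k x)))).

Lemma I2 : is_RInt_gen (fun x => 8 * (x * (x * (x * (x * (phi k x * phi k x)))))
   + (-6 * w k) * (x * (x * (phi k x * phi k x))) + (-3) * (phi k x * phi k x)) mi pi 0.
Proof. apply (gen_zero _ G2).
  - intro x. unfold G2. eapply dR_eq. der_tac. unfold w. ring.
  - intro x. cont_tac.
  - unfold G2. dom_tac.
Qed.

Definition G3 x := phi k x * psi k x + (-1) * (x * (phi k x * phi k x)).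

Lemma I3 : is_RInt_gen (fun x => phi (S k) x * phi (S k) x + (- (2 * INR k + 2)) * (phi k x * phi k x)) mi pi 0.
Proof. apply (gen_zero _ G3).
  - intro x. unfold G3. eapply dR_eq. der_tac. rewrite phi_S. ring.
  - intro x. cont_tac.
  - unfold G3. dom_tac.
Qed.

Definition En x := psi k x * psi k x + w k * (phi k x * phi k x) + (-1) * (x * (x * (phi k x * phi k x))).

Lemma En_der x : is_derive En x (-2 * (x * (phi k x * phi k x))).
Proof. unfold En. eapply dR_eq. der_tac. unfold w. ring. Qed.

Lemma En_dom : Dom En.
Proof. unfold En. dom_tac. Qed.

Lemma absE : is_RInt_gen (fun x => 2 * (Rabs x * (phi k x * phi k x))) mi pi (2 * En 0).
Proof.
  replace (2 * En 0) with (En 0 - 0 - (0 - En 0)) by ring.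
  apply (gen_prim _ (fun b => En 0 - En b) (fun a => En a - En 0) 0).
  - intros a b Ha Hb.
    replace (En 0 - En b - (En a - En 0)) with ((En 0 - En a) + (En 0 - En b)) by ring.
    apply (RI_chasles _ a 0 b).
    + apply (is_RInt_ext (fun x => -2 * (x * (phi k x * phi k x)))).
      { intros x [h1 h2]. rewrite Rmax_right in h2 by lra. rewrite (Rabs_left x h2). apply (fun u v : R => (ltac:(ring) : -2 * (u * v) = 2 * (- u * v))). }
      apply (RI_derive En). intros; apply En_der. intros; cont_tac.
    + apply (is_RInt_ext (fun x => - (-2 * (x * (phi k x * phi k x))))).
      { intros x [h1 h2]. rewrite Rmin_left in h1 by lra. rewrite Rabs_right by lra. apply (fun u v : R => (ltac:(ring) : - (-2 * (u * v)) = 2 * (u * v))). }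
      replace (En 0 - En b) with (- (En b - En 0)) by ring.
      apply RI_opp. apply (RI_derive En). intros; apply En_der. intros; cont_tac.
  - apply lim_cminus. apply Rbar_locally_filter. apply Dom_lim_p, En_dom.
  - apply lim_minusc. apply Rbar_locally_filter. apply Dom_lim_m, En_dom.
Qed.

End K.

Lemma gen_lin3 (f g h : R -> R) (a b c lf lg lh : R) : is_RInt_gen f mi pi lf -> is_RInt_gen g mi pi lg ->
  is_RInt_gen h mi pi lh ->
  is_RInt_gen (fun x => a * f x + b * g x + c * h x) mi pi (a * lf + b * lg + c * lh).
Proof. intros Hf Hg Hh. assert (H1 := gen_lin f g a b lf lg Hf Hg).
  assert (H2 := gen_lin _ h 1 c _ lh H1 Hh).
  replace (a * lf + b * lg + c * lh) with (1 * (a * lf + b * lg) + c * lh) by ring.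
  eapply gen_ext; [| exact H2]. intro x; simpl; ring. Qed.

Lemma sq_nonneg (u : R) : 0 <= u * u.
Proof. nra. Qed.

Lemma ex_cont (f : R -> R) a b : (forall x, continuous f x) -> ex_RInt f a b.
Proof. intros; apply (@ex_RInt_continuous R_CompleteNormedModule); auto. Qed.

Lemma mom k : exists m0 m2 m4 : R,
  is_RInt_gen (fun x => phi k x * phi k x) mi pi m0 /\
  is_RInt_gen (fun x => x * (x * (phi k x * phi k x))) mi pi m2 /\
  is_RInt_gen (fun x => x * (x * (x * (x * (phi k x * phi k x))))) mi pi m4 /\
  4 * m2 = 2 * w k * m0 /\ 8 * m4 = 6 * w k * m2 + 3 * m0.
Proof.
  destruct (Dom_ex (fun x => phi k x * phi k x)) as [m0 H0].
  dom_tac. intro; cont_tac. intro; apply sq_nonneg.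
  destruct (Dom_ex (fun x => x * (x * (phi k x * phi k x)))) as [m2 H2].
  dom_tac. intro; cont_tac. intro x; pose proof (sq_nonneg (phi k x)); pose proof (sq_nonneg x). nra.
  destruct (Dom_ex (fun x => x * (x * (x * (x * (phi k x * phi k x)))))) as [m4 H4].
  dom_tac. intro; cont_tac. intro x; pose proof (sq_nonneg (phi k x)); pose proof (sq_nonneg (x * x)). nra.
  exists m0, m2, m4. repeat split; auto.
  - assert (h := gen_lin _ _ (2 * w k) (-4) _ _ H0 H2).
    pose proof (gen_unique _ _ _ h (I1 k)). lra.
  - assert (h := gen_lin3 _ _ _ 8 (-6 * w k) (-3) _ _ _ H4 H2 H0).
    pose proof (gen_unique _ _ _ h (I2 k)). lra.
Qed.

Lemma ladder k (m0 m0' : R) : is_RInt_gen (fun x => phi k x * phi k x) mi pi m0 ->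
  is_RInt_gen (fun x => phi (S k) x * phi (S k) x) mi pi m0' -> m0' = (2 * INR k + 2) * m0.
Proof. intros H0 H1. assert (h := gen_lin _ _ 1 (- (2 * INR k + 2)) _ _ H1 H0).
  assert (h' : is_RInt_gen (fun x => phi (S k) x * phi (S k) x + (- (2 * INR k + 2)) * (phi k x * phi k x)) mi pi
     (1 * m0' + - (2 * INR k + 2) * m0)).
  { eapply gen_ext; [|exact h]. intro; simpl; ring. }
  pose proof (gen_unique _ _ _ h' (I3 k)). lra. Qed.

Lemma qlem K s a : 1 <= K -> 0 <= s -> s * s = K / 2 -> 0 <= a ->
  s * ((16/49) * ((- (a * a * (a * a)) + (9 * K / 2) * (a * a) - 2 * K * K) / (K * K))) <= a.
Proof. intros HK Hs Hss Ha. set (y := a * a).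
  assert (HKK : 0 < K * K) by nra.
  set (Q := - (y * y) + (9 * K / 2) * y - 2 * K * K).
  destruct (Rle_lt_dec Q 0) as [hQ|hQ].
  - assert (Q / (K * K) <= 0). { unfold Rdiv. apply Rmult_le_0_r; auto. left; apply Rinv_0_lt_compat; auto. }
    nra.
  - assert (hy : K / 2 < y). { destruct (Rle_lt_dec y (K/2)); auto. unfold Q in hQ. nra. }
    assert (hsa : s <= a). { destruct (Rle_lt_dec s a); auto. unfold y in hy. nra. }
    assert (hQ2 : Q <= 49 / 16 * (K * K)). { unfold Q. pose proof (sq_nonneg (y - 9 * K / 4)). nra. }
    assert (Q / (K * K) <= 49 / 16). { apply Rmult_le_reg_r with (K * K); auto. unfold Rdiv.
      rewrite Rmult_assoc, Rinv_l by lra. lra. }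
    assert (0 <= Q / (K * K)). { unfold Rdiv. apply Rmult_le_pos. lra. left; apply Rinv_0_lt_compat; auto. }
    nra.
Qed.

Lemma m0_nonneg k (m0 : R) : is_RInt_gen (fun x => phi k x * phi k x) mi pi m0 -> 0 <= m0.
Proof. intros H. apply (gen_nonneg _ _ H). intro; apply sq_nonneg. Qed.

Lemma E0_low k (m0 : R) : 1 <= INR k -> is_RInt_gen (fun x => phi k x * phi k x) mi pi m0 ->
  sqrt (INR k / 2) * (16 / 49) * m0 <= En k 0.
Proof.
  intros Hk H0. destruct (mom k) as [m0' [m2 [m4 [H0' [H2 [H4 [R1 R2]]]]]]].
  assert (e := gen_unique _ _ _ H0 H0'). subst m0'.
  set (K := INR k) in *. set (s := sqrt (K / 2)).
  assert (Hs : 0 <= s) by apply sqrt_pos.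
  assert (Hss : s * s = K / 2). { unfold s. apply sqrt_sqrt. lra. }
  assert (HKK : 0 < K * K) by nra.
  set (c := 2 * s * (16 / 49) / (K * K)).
  assert (h := gen_lin3 _ _ _ (- c) (c * (9 * K / 2)) (c * (- 2 * K * K)) _ _ _ H4 H2 H0).
  assert (hle := gen_le _ _ _ _ h (absE k)).
  assert (Hm0 := m0_nonneg k m0 H0).
  assert (H : - c * m4 + c * (9 * K / 2) * m2 + c * (-2 * K * K) * m0 <= 2 * En k 0).
  { apply hle. intro x. simpl.
    assert (hq := qlem K s (Rabs x) Hk Hs Hss (Rabs_pos x)).
    assert (hx2 : Rabs x * Rabs x = x * x) by (rewrite <- Rabs_mult; apply Rabs_right; apply Rle_ge, sq_nonneg).
    rewrite hx2 in hq. pose proof (sq_nonneg (phi k x)).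
    unfold c. set (P := phi k x * phi k x) in *.
    assert (E : - (2 * s * (16 / 49) / (K * K)) * (x * (x * (x * (x * P)))) +
      2 * s * (16 / 49) / (K * K) * (9 * K / 2) * (x * (x * P)) +
      2 * s * (16 / 49) / (K * K) * (-2 * K * K) * P =
      2 * P * (s * (16 / 49 * ((- (x * x * (x * x)) + 9 * K / 2 * (x * x) - 2 * K * K) / (K * K))))).
    { field. lra. }
    rewrite E. nra. }
  unfold w in R1, R2. fold K in R1, R2.
  assert (Hc : - c * m4 + c * (9 * K / 2) * m2 + c * (-2 * K * K) * m0 = c * m0 * (K * K + 3/4 * K - 3/4)).
  { assert (m2 = (2 * K + 1) * m0 / 2) by lra. assert (m4 = (6 * (2 * K + 1) * m2 + 3 * m0) / 8) by lra.
    subst m4. subst m2. field. }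
  rewrite Hc in H. unfold c in H.
  assert (0 <= s * m0) by nra.
  assert (2 * s * (16 / 49) / (K * K) * m0 * (K * K + 3 / 4 * K - 3 / 4) =
     2 * (s * (16/49) * m0) * (1 + (3/4 * K - 3/4) / (K * K))) by (field; lra).
  assert (0 <= (3/4 * K - 3/4) / (K * K)). { unfold Rdiv; apply Rmult_le_pos. lra. left; apply Rinv_0_lt_compat; auto. }
  nra.
Qed.

Lemma RInt_chasles_R (f : R -> R) a b c : ex_RInt f a b -> ex_RInt f b c -> RInt f a b + RInt f b c = RInt f a c.
Proof. intros. apply (RInt_Chasles f a b c); auto. Qed.

Lemma RI_unique (f : R -> R) a b (l : R) : is_RInt f a b l -> RInt f a b = l.
Proof. intros; apply is_RInt_unique; auto. Qed.

Lemma Jb k : 1 <= INR k -> En k 0 <= RInt (fun x => (2 * w k + /2) * (phi k x * phi k x)) (-1) 1.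
Proof.
  intros Hk.
  assert (Hw : 3 <= w k) by (unfold w; lra).
  set (Jf := fun x => (2 * w k + /2) * (phi k x * phi k x)).
  assert (cJ : forall x, continuous Jf x) by (intro; unfold Jf; cont_tac).
  set (d1 := fun x => (2 * w k - 2 * (x * x) + 2 * x * (1 - x)) * (phi k x * phi k x)).
  set (d2 := fun x => (2 * w k - 2 * (x * x) - 2 * x * (x + 1)) * (phi k x * phi k x)).
  set (D1 := fun x => (x - 1) * En k x - phi k x * psi k x).
  set (D2 := fun x => (x + 1) * En k x - phi k x * psi k x).
  assert (hD1 : forall x, is_derive D1 x (d1 x)).
  { intro x. unfold D1, d1. eapply dR_eq.
    apply dR_minus. apply dR_mult. apply dR_minus. apply dR_id. apply dR_const. apply En_der.
    apply dR_mult. apply phi_der. apply psi_der.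
    cbv beta. unfold En, w. ring. }
  assert (hD2 : forall x, is_derive D2 x (d2 x)).
  { intro x. unfold D2, d2. eapply dR_eq.
    apply dR_minus. apply dR_mult. apply dR_plus. apply dR_id. apply dR_const. apply En_der.
    apply dR_mult. apply phi_der. apply psi_der.
    cbv beta. unfold En, w. ring. }
  assert (c1 : forall x, continuous d1 x) by (intro; unfold d1; cont_tac).
  assert (c2 : forall x, continuous d2 x) by (intro; unfold d2; cont_tac).
  assert (i1 : RInt d1 0 1 = D1 1 - D1 0) by (apply is_RInt_unique; apply RI_derive; auto).
  assert (i2 : RInt d2 (-1) 0 = D2 0 - D2 (-1)) by (apply is_RInt_unique; apply RI_derive; auto).
  assert (l1 : RInt d1 0 1 <= RInt Jf 0 1).
  { apply RInt_le. lra. apply ex_cont; auto. apply ex_cont; auto.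
    intros x _. unfold d1, Jf. pose proof (sq_nonneg (phi k x)). pose proof (sq_nonneg (4 * x - 1)). nra. }
  assert (l2 : RInt d2 (-1) 0 <= RInt Jf (-1) 0).
  { apply RInt_le. lra. apply ex_cont; auto. apply ex_cont; auto.
    intros x _. unfold d2, Jf. pose proof (sq_nonneg (phi k x)). pose proof (sq_nonneg (4 * x + 1)). nra. }
  assert (e1 : En k 1 <= En k 0).
  { assert (h : is_RInt (fun x => 2 * (x * (phi k x * phi k x))) 0 1 ((fun x => -1 * En k x) 1 - (fun x => -1 * En k x) 0)).
    { apply (RI_derive (fun x => -1 * En k x)). intro x. eapply dR_eq. apply (dR_scal (-1) (En k)). apply En_der. cbv beta. ring.
      intro; cont_tac. }
    apply RI_unique in h. cbv beta in h.
    assert (0 <= RInt (fun x => 2 * (x * (phi k x * phi k x))) 0 1).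
    { apply RInt_ge_0. lra. apply ex_cont. intro; cont_tac. intros x Hx.
      pose proof (sq_nonneg (phi k x)). nra. }
    lra. }
  assert (e2 : En k (-1) <= En k 0).
  { assert (h : is_RInt (fun x => -2 * (x * (phi k x * phi k x))) (-1) 0 (En k 0 - En k (-1))).
    { apply (RI_derive (En k)). apply En_der. intro; cont_tac. }
    apply RI_unique in h.
    assert (0 <= RInt (fun x => -2 * (x * (phi k x * phi k x))) (-1) 0).
    { apply RInt_ge_0. lra. apply ex_cont. intro; cont_tac. intros x Hx.
      pose proof (sq_nonneg (phi k x)). nra. }
    lra. }
  assert (b1 : 2 * (phi k 1 * psi k 1) <= En k 1).
  { unfold En. pose proof (sq_nonneg (phi k 1 - psi k 1)). pose proof (sq_nonneg (phi k 1)). nra. }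
  assert (b2 : - 2 * (phi k (-1) * psi k (-1)) <= En k (-1)).
  { unfold En. pose proof (sq_nonneg (phi k (-1) + psi k (-1))). pose proof (sq_nonneg (phi k (-1))). nra. }
  rewrite <- (RInt_chasles_R Jf (-1) 0 1) by (apply ex_cont; auto).
  unfold D1, D2 in i1, i2. cbv beta in i1, i2.
  replace ((1 - 1) * En k 1) with 0 in i1 by ring. replace ((0 - 1) * En k 0) with (- En k 0) in i1 by ring.
  replace ((0 + 1) * En k 0) with (En k 0) in i2 by ring. replace ((-1 + 1) * En k (-1)) with 0 in i2 by ring.
  lra.
Qed.

Lemma Rpower_pos a b : 0 < Rpower a b.
Proof. apply exp_pos. Qed.

Lemma Rpower_sq a b : 0 < a -> Rpower (a * a) (b / 2) = Rpower a b.
Proof. intros. unfold Rpower. rewrite ln_mult by auto. f_equal. field. Qed.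

Lemma Rpower_anti a b c : 0 <= c -> 0 < a <= b -> Rpower b (- c) <= Rpower a (- c).
Proof. intros. rewrite !Rpower_Ropp. apply Rinv_le_contravar. apply Rpower_pos.
  apply Rle_Rpower_l; auto. Qed.

Lemma weight_bound (a : R) : exists n, forall x, Rabs (Rpower (1 + Rabs x) a) <= (1 + Rabs x) ^ n.
Proof.
  destruct (archimed a) as [h1 h2].
  exists (Z.to_nat (Z.max 0 (up a))). intro x. pose proof (Rabs_pos x).
  rewrite Rabs_right by (apply Rle_ge, Rlt_le, Rpower_pos).
  rewrite <- Rpower_pow by lra. apply Rle_Rpower. lra.
  rewrite INR_IZR_INZ. rewrite Z2Nat.id by lia.
  assert (IZR (up a) <= IZR (Z.max 0 (up a))) by (apply IZR_le; lia). lra.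
Qed.

Lemma phi0_pos x : 0 < phi 0 x * phi 0 x.
Proof. unfold phi, H; simpl. rewrite Rmult_1_l. pose proof (g2_pos x). nra. Qed.

Lemma cst_pos k : 0 < cst k.
Proof. unfold cst. apply Rinv_0_lt_compat. apply sqrt_lt_R0. apply Rmult_lt_0_compat. apply Rmult_lt_0_compat.
  apply pow_lt; lra. apply lt_0_INR, lt_O_fact. apply sqrt_lt_R0, PI_RGT_0. Qed.

Lemma norm_exists : exists N, 0 < N /\ forall k (m : R), is_RInt_gen (fun x => phi k x * phi k x) mi pi m -> cst k ^ 2 * m = N.
Proof.
  destruct (mom 0) as [m00 [_ [_ [H00 _]]]].
  exists (cst 0 ^ 2 * m00). split.
  - apply Rmult_lt_0_compat. pose proof (cst_pos 0). nra.
    apply Rlt_le_trans with (RInt (fun x => phi 0 x * phi 0 x) 0 1).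
    apply RInt_gt_0. lra. intros; apply phi0_pos. intros; cont_tac.
    apply (gen_sub _ _ _ _ H00). intro; apply sq_nonneg. intro; cont_tac. lra.
  - induction k as [|k IH]; intros m Hm.
    + rewrite (gen_unique _ _ _ Hm H00). reflexivity.
    + destruct (mom k) as [mk [_ [_ [Hk _]]]].
      rewrite (ladder k mk m Hk Hm). rewrite cst_sq_S. rewrite <- (IH mk Hk).
      rewrite S_INR. field. pose proof (pos_INR k). lra.
Qed.

Definition Fw k a x := cst k ^ 2 * (phi k x * phi k x) * Rpower (1 + Rabs x) a.

Lemma Fw_eq k a x : hermite_fun k x ^ 2 * Rpower (1 + Rabs x) a = Fw k a x.
Proof. unfold Fw. rewrite hermite_phi. ring. Qed.

Lemma Fw_nonneg k a x : 0 <= Fw k a x.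
Proof. unfold Fw. apply Rmult_le_pos. apply Rmult_le_pos. pose proof (cst_pos k); nra. apply sq_nonneg.
  left; apply Rpower_pos. Qed.

Lemma Fw_cont k a x : continuous (Fw k a) x.
Proof. unfold Fw. cont_tac. Qed.

Lemma Fw_ex k a : exists I : R, is_RInt_gen (Fw k a) mi pi I.
Proof. destruct (weight_bound a) as [n Hn]. apply Dom_ex.
  - apply (Dom_weight (fun x => cst k ^ 2 * (phi k x * phi k x)) (fun x => Rpower (1 + Rabs x) a) n).
    apply Dom_scal, Dom_phiphi. auto.
  - apply Fw_cont.
  - apply Fw_nonneg.
Qed.

Lemma qfacts K y : 1 <= K -> 0 <= y ->
  (16/49) * ((- (y * y) + (9 * K / 2) * y - 2 * K * K) / (K * K)) <= 1 /\
  (0 < (16/49) * ((- (y * y) + (9 * K / 2) * y - 2 * K * K) / (K * K)) -> K / 2 < y).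
Proof. intros HK Hy. assert (HKK : 0 < K * K) by nra.
  set (Q := - (y * y) + (9 * K / 2) * y - 2 * K * K).
  assert (hQ2 : Q <= 49 / 16 * (K * K)). { unfold Q. pose proof (sq_nonneg (y - 9 * K / 4)). nra. }
  assert (Q / (K * K) <= 49 / 16). { apply Rmult_le_reg_r with (K * K); auto. unfold Rdiv.
      rewrite Rmult_assoc, Rinv_l by lra. lra. }
  split. lra. intro hpos.
  assert (0 < Q). { destruct (Rle_lt_dec Q 0); auto. exfalso.
    assert (Q / (K * K) <= 0). { unfold Rdiv. apply Rmult_le_0_r; auto. left; apply Rinv_0_lt_compat; auto. }
    lra. }
  destruct (Rle_lt_dec y (K/2)); auto. unfold Q in *. nra.
Qed.

Lemma first_bound a k N : 0 <= a -> 1 <= INR k ->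
  (forall (m : R), is_RInt_gen (fun x => phi k x * phi k x) mi pi m -> cst k ^ 2 * m = N) ->
  forall I, is_RInt_gen (Fw k a) mi pi I ->
  Rpower (/2) (a/2) * (16/49) * N * Rpower (INR k) (a/2) <= I.
Proof.
  intros Ha Hk HN I HI.
  destruct (mom k) as [m0 [m2 [m4 [H0 [H2 [H4 [R1 R2]]]]]]].
  assert (HN0 := HN m0 H0).
  set (K := INR k) in *.
  assert (HKK : 0 < K * K) by nra.
  set (P := Rpower (K / 2) (a / 2)).
  assert (HP : 0 < P) by apply Rpower_pos.
  set (c := P * (16 / 49) * cst k ^ 2 / (K * K)).
  assert (h := gen_lin3 _ _ _ (- c) (c * (9 * K / 2)) (c * (- 2 * K * K)) _ _ _ H4 H2 H0).
  assert (hle := gen_le _ _ _ _ h HI).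
  assert (Hm0 := m0_nonneg k m0 H0).
  assert (Hc2 : 0 < cst k ^ 2) by (pose proof (cst_pos k); nra).
  assert (H : - c * m4 + c * (9 * K / 2) * m2 + c * (-2 * K * K) * m0 <= I).
  { apply hle. intro x. unfold Fw. cbv beta.
    pose proof (sq_nonneg (phi k x)). set (u := phi k x * phi k x) in *.
    destruct (qfacts K (x * x) Hk (sq_nonneg x)) as [q1 q2].
    set (r := (16/49) * ((- (x * x * (x * x)) + (9 * K / 2) * (x * x) - 2 * K * K) / (K * K))) in *.
    assert (E : - c * (x * (x * (x * (x * u)))) + c * (9 * K / 2) * (x * (x * u)) + c * (-2 * K * K) * u
       = cst k ^ 2 * u * (P * r)).
    { unfold c, r. field. lra. }
    rewrite E. apply Rmult_le_compat_l. apply Rmult_le_pos; lra.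
    destruct (Rle_lt_dec r 0) as [hr|hr].
    - pose proof (Rpower_pos (1 + Rabs x) a). nra.
    - specialize (q2 hr).
      assert (P <= Rpower (1 + Rabs x) a).
      { unfold P. rewrite <- (Rpower_sq (1 + Rabs x) a) by (pose proof (Rabs_pos x); lra).
        apply Rle_Rpower_l. lra. split. lra.
        pose proof (Rabs_pos x). assert (x * x = Rabs x * Rabs x) by (rewrite <- Rabs_mult, Rabs_right; [auto| apply Rle_ge, sq_nonneg]).
        nra. }
      nra. }
  unfold w in R1, R2. fold K in R1, R2.
  assert (Hc : - c * m4 + c * (9 * K / 2) * m2 + c * (-2 * K * K) * m0 = c * m0 * (K * K + 3/4 * K - 3/4)).
  { assert (m2 = (2 * K + 1) * m0 / 2) by lra. assert (m4 = (6 * (2 * K + 1) * m2 + 3 * m0) / 8) by lra.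
    subst m4. subst m2. field. }
  rewrite Hc in H. unfold c in H.
  assert (EP : P = Rpower (/2) (a/2) * Rpower K (a/2)).
  { unfold P. rewrite Rpower_mult_distr by lra. f_equal. unfold Rdiv; ring. }
  assert (0 <= P * cst k ^ 2 * m0) by (apply Rmult_le_pos; nra).
  assert (P * (16 / 49) * cst k ^ 2 / (K * K) * m0 * (K * K + 3 / 4 * K - 3 / 4) =
     (16/49) * (P * cst k ^ 2 * m0) * (1 + (3/4 * K - 3/4) / (K * K))) by (field; lra).
  assert (0 <= (3/4 * K - 3/4) / (K * K)). { unfold Rdiv; apply Rmult_le_pos. lra. left; apply Rinv_0_lt_compat; auto. }
  assert (Rpower (/ 2) (a / 2) * (16 / 49) * N * Rpower K (a / 2) = (16/49) * (P * cst k ^ 2 * m0)).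
  { rewrite EP, <- HN0. ring. }
  nra.
Qed.

Lemma secondA a k N : 0 <= a -> 1 <= INR k ->
  (forall (m : R), is_RInt_gen (fun x => phi k x * phi k x) mi pi m -> cst k ^ 2 * m = N) ->
  forall I, is_RInt_gen (Fw k (- a)) mi pi I ->
  Rpower 10 (- a / 2) * N / 2 * Rpower (INR k) (- a / 2) <= I.
Proof.
  intros Ha Hk HN I HI.
  destruct (mom k) as [m0 [m2 [m4 [H0 [H2 [H4 [R1 R2]]]]]]].
  assert (HN0 := HN m0 H0).
  set (K := INR k) in *.
  set (P := Rpower (10 * K) (- a / 2)).
  assert (HP : 0 < P) by apply Rpower_pos.
  set (d := P * cst k ^ 2).
  assert (h := gen_lin _ _ d (- d / (4 * K)) _ _ H0 H2).
  assert (hle := gen_le _ _ _ _ h HI).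
  assert (Hm0 := m0_nonneg k m0 H0).
  assert (Hc2 : 0 < cst k ^ 2) by (pose proof (cst_pos k); nra).
  assert (H : d * m0 + - d / (4 * K) * m2 <= I).
  { apply hle. intro x. unfold Fw. cbv beta.
    pose proof (sq_nonneg (phi k x)). set (u := phi k x * phi k x) in *.
    assert (E : d * u + - d / (4 * K) * (x * (x * u)) = cst k ^ 2 * u * (P * (1 - x * x / (4 * K)))).
    { unfold d. field. lra. }
    rewrite E. apply Rmult_le_compat_l. apply Rmult_le_pos; lra.
    destruct (Rle_lt_dec (4 * K) (x * x)) as [hx|hx].
    - assert (1 - x * x / (4 * K) <= 0).
      { assert (1 <= x * x / (4 * K)). { apply Rmult_le_reg_r with (4 * K). lra. unfold Rdiv.
          rewrite Rmult_assoc, Rinv_l by lra. lra. } lra. }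
      pose proof (Rpower_pos (1 + Rabs x) (- a)). nra.
    - assert (0 <= x * x / (4 * K)). { unfold Rdiv. apply Rmult_le_pos. apply sq_nonneg. left; apply Rinv_0_lt_compat; lra. }
      assert (P <= Rpower (1 + Rabs x) (- a)).
      { unfold P. rewrite <- (Rpower_sq (1 + Rabs x) (- a)) by (pose proof (Rabs_pos x); lra).
        replace (- a / 2) with (- (a / 2)) by field.
        apply Rpower_anti. lra. split. pose proof (Rabs_pos x); nra.
        pose proof (Rabs_pos x). assert (x * x = Rabs x * Rabs x) by (rewrite <- Rabs_mult, Rabs_right; [auto| apply Rle_ge, sq_nonneg]).
        pose proof (sq_nonneg (Rabs x - 1)). nra. }
      nra. }
  unfold w in R1. fold K in R1.
  assert (Hc : d * m0 + - d / (4 * K) * m2 = d * m0 * (1 - (2 * K + 1) / (8 * K))).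
  { assert (m2 = (2 * K + 1) * m0 / 2) by lra. subst m2. field. lra. }
  rewrite Hc in H.
  assert ((2 * K + 1) / (8 * K) <= 1/2). { apply Rmult_le_reg_r with (8 * K). lra. unfold Rdiv.
     rewrite Rmult_assoc, Rinv_l by lra. lra. }
  assert (0 <= d * m0) by (unfold d; apply Rmult_le_pos; nra).
  assert (EP : P = Rpower 10 (- a / 2) * Rpower K (- a / 2)).
  { unfold P. rewrite Rpower_mult_distr by lra. reflexivity. }
  assert (Rpower 10 (- a / 2) * N / 2 * Rpower K (- a / 2) = d * m0 / 2).
  { unfold d. rewrite EP, <- HN0. field. }
  nra.
Qed.

Lemma RInt_scal_R (f : R -> R) a b c : ex_RInt f a b -> RInt (fun x => c * f x) a b = c * RInt f a b.
Proof. intros. apply (RInt_scal f a b c); auto. Qed.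

Lemma secondB a k N : 0 <= a -> 1 <= INR k ->
  (forall (m : R), is_RInt_gen (fun x => phi k x * phi k x) mi pi m -> cst k ^ 2 * m = N) -> 0 < N ->
  forall I, is_RInt_gen (Fw k (- a)) mi pi I ->
  Rpower 2 (- a) * N * (16 / 49) / (7 * sqrt 2) * Rpower (INR k) (- (1 / 2)) <= I.
Proof.
  intros Ha Hk HN HNp I HI.
  destruct (mom k) as [m0 [_ [_ [H0 _]]]].
  assert (HN0 := HN m0 H0).
  assert (Hm0 := m0_nonneg k m0 H0).
  assert (Hc2 : 0 < cst k ^ 2) by (pose proof (cst_pos k); nra).
  assert (hsub := gen_sub _ _ (-1) 1 HI (Fw_nonneg k (- a)) (Fw_cont k (- a)) ltac:(lra)).
  assert (Hw : 0 < 2 * w k + / 2) by (unfold w; lra).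
  set (e := Rpower 2 (- a) * cst k ^ 2 / (2 * w k + / 2)).
  set (Jf := fun x => (2 * w k + / 2) * (phi k x * phi k x)).
  assert (h1 : RInt (fun x => e * Jf x) (-1) 1 <= RInt (Fw k (- a)) (-1) 1).
  { apply RInt_le. lra. apply ex_cont. intro; unfold Jf; cont_tac. apply ex_cont. apply Fw_cont.
    intros x Hx. unfold Fw, Jf, e. pose proof (sq_nonneg (phi k x)).
    assert (Rpower 2 (- a) <= Rpower (1 + Rabs x) (- a)).
    { apply Rpower_anti; auto. pose proof (Rabs_pos x). split. lra. 
      assert (Rabs x <= 1) by (apply Rabs_le; lra). lra. }
    replace (Rpower 2 (- a) * cst k ^ 2 / (2 * w k + / 2) * ((2 * w k + / 2) * (phi k x * phi k x)))
      with (cst k ^ 2 * (phi k x * phi k x) * Rpower 2 (- a)) by (field; lra).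
    apply Rmult_le_compat_l; nra. }
  rewrite RInt_scal_R in h1 by (apply ex_cont; intro; unfold Jf; cont_tac).
  assert (hJ := Jb k Hk). fold Jf in hJ.
  assert (hE := E0_low k m0 Hk H0).
  set (K := INR k) in *.
  assert (He : 0 < e) by (unfold e; apply Rmult_lt_0_compat; [apply Rmult_lt_0_compat; [apply Rpower_pos|auto] | apply Rinv_0_lt_compat; auto]).
  assert (hI : e * (sqrt (K / 2) * (16 / 49) * m0) <= I).
  { apply Rle_trans with (e * RInt Jf (-1) 1). apply Rmult_le_compat_l; lra. lra. }
  set (t := sqrt K).
  assert (Ht : 0 < t) by (apply sqrt_lt_R0; lra).
  assert (Htt : t * t = K) by (apply sqrt_sqrt; lra).
  assert (Es : sqrt (K / 2) = t / sqrt 2) by (apply sqrt_div; lra).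
  assert (Hs2 : 0 < sqrt 2) by (apply sqrt_lt_R0; lra).
  assert (Ek : Rpower K (- (1 / 2)) = / t).
  { rewrite Rpower_Ropp. f_equal. replace (1 / 2) with (/ 2) by field. apply Rpower_sqrt. lra. }
  rewrite Ek. rewrite Es in hI.
  assert (Ew : 2 * w k + / 2 = 4 * (t * t) + 5 / 2) by (unfold w; fold K; rewrite Htt; field).
  unfold e in hI. rewrite Ew in hI.
  assert (X : e * (t / sqrt 2 * (16 / 49) * m0) = Rpower 2 (- a) * N * (16 / 49) / sqrt 2 * (t / (4 * (t * t) + 5 / 2))).
  { unfold e. rewrite Ew, <- HN0. field. split; lra. }
  unfold e in X. rewrite Ew in X. rewrite X in hI.
  assert (Y : / t / 7 <= t / (4 * (t * t) + 5 / 2)).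
  { assert (t / (4 * (t * t) + 5 / 2) - / t / 7 = (3 * (t * t) - 5 / 2) / (7 * t * (4 * (t * t) + 5 / 2))) by (field; nra).
    assert (0 <= (3 * (t * t) - 5 / 2) / (7 * t * (4 * (t * t) + 5 / 2))).
    { unfold Rdiv. apply Rmult_le_pos. nra. left. apply Rinv_0_lt_compat. nra. }
    lra. }
  assert (0 < Rpower 2 (- a) * N * (16 / 49) / sqrt 2).
  { unfold Rdiv. apply Rmult_lt_0_compat. apply Rmult_lt_0_compat. apply Rmult_lt_0_compat; auto. apply Rpower_pos. lra.
    apply Rinv_0_lt_compat; auto. }
  replace (Rpower 2 (- a) * N * (16 / 49) / (7 * sqrt 2) * / t) with (Rpower 2 (- a) * N * (16 / 49) / sqrt 2 * (/ t / 7)) by (field; split; lra).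
  eapply Rle_trans; [| exact hI]. apply Rmult_le_compat_l; lra.
Qed.

Theorem lemma4p9 (alpha : R) (halpha : 0 <= alpha) :
  exists C : R, 0 < C /\
  exists N : nat, forall k : nat, (N <= k)%nat ->
    (exists I : R,
       is_RInt_gen (fun x => hermite_fun k x ^ 2 * Rpower (1 + Rabs x) alpha)
         (Rbar_locally m_infty) (Rbar_locally p_infty) I
       /\ C * Rpower (INR k) (alpha / 2) <= I)
    /\
    (exists I : R,
       is_RInt_gen (fun x => hermite_fun k x ^ 2 * Rpower (1 + Rabs x) (- alpha))
         (Rbar_locally m_infty) (Rbar_locally p_infty) I
       /\ C * Rmax (Rpower (INR k) (- alpha / 2)) (Rpower (INR k) (- (1 / 2))) <= I).
Proof.
  destruct norm_exists as [Nn [HNp HN]].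
  set (c1 := Rpower (/2) (alpha/2) * (16/49) * Nn).
  set (c2 := Rpower 10 (- alpha / 2) * Nn / 2).
  set (c3 := Rpower 2 (- alpha) * Nn * (16 / 49) / (7 * sqrt 2)).
  assert (Hs2 : 0 < sqrt 2) by (apply sqrt_lt_R0; lra).
  assert (h1 : 0 < c1) by (unfold c1; pose proof (Rpower_pos (/2) (alpha/2)); nra).
  assert (h2 : 0 < c2) by (unfold c2; pose proof (Rpower_pos 10 (- alpha/2)); nra).
  assert (h3 : 0 < c3).
  { unfold c3. unfold Rdiv. apply Rmult_lt_0_compat. pose proof (Rpower_pos 2 (- alpha)); nra.
    apply Rinv_0_lt_compat; lra. }
  exists (Rmin c1 (Rmin c2 c3 / 2)). split.
  { assert (0 < Rmin c2 c3) by (apply Rmin_glb_lt; auto). apply Rmin_glb_lt; auto. lra. }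
  exists 1%nat. intros k Hk.
  assert (HK : 1 <= INR k) by (replace 1 with (INR 1) by reflexivity; apply le_INR; auto).
  assert (Hm1 := Rmin_l c1 (Rmin c2 c3 / 2)). assert (Hm2 := Rmin_r c1 (Rmin c2 c3 / 2)).
  assert (Hm3 := Rmin_l c2 c3). assert (Hm4 := Rmin_r c2 c3).
  split.
  - destruct (Fw_ex k alpha) as [I HI]. exists I. split.
    + eapply gen_ext; [| exact HI]. intro x. symmetry. apply Fw_eq.
    + assert (hb := first_bound alpha k Nn halpha HK (HN k) I HI). fold c1 in hb.
      pose proof (Rpower_pos (INR k) (alpha / 2)).
      apply Rle_trans with (c1 * Rpower (INR k) (alpha / 2)); auto.
      apply Rmult_le_compat_r; lra.
  - destruct (Fw_ex k (- alpha)) as [I HI]. exists I. split.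
    + eapply gen_ext; [| exact HI]. intro x. symmetry. apply Fw_eq.
    + assert (hA := secondA alpha k Nn halpha HK (HN k) I HI). fold c2 in hA.
      assert (hB := secondB alpha k Nn halpha HK (HN k) HNp I HI). fold c3 in hB.
      set (A := Rpower (INR k) (- alpha / 2)) in *.
      set (B := Rpower (INR k) (- (1 / 2))) in *.
      assert (0 < A) by apply Rpower_pos. assert (0 < B) by apply Rpower_pos.
      assert (Rmax A B <= A + B) by (apply Rmax_lub; lra).
      set (C := Rmin c1 (Rmin c2 c3 / 2)) in *.
      assert (0 < Rmin c2 c3) by (apply Rmin_glb_lt; auto).
      assert (0 < C) by (unfold C; apply Rmin_glb_lt; auto; lra).
      apply Rle_trans with (C * (A + B)). apply Rmult_le_compat_l; lra.
      assert (C * A <= c2 / 2 * A) by (apply Rmult_le_compat_r; lra).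
      assert (C * B <= c3 / 2 * B) by (apply Rmult_le_compat_r; lra).
      lra.
Qed.
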